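(* Let $m_a, M_a \in \mathbb{R}$ and $x_a>1$, and suppose that for all $x > x_a$ $$ x \sum_{k=0}^{4} \frac{k!}{\log^{k+1}x}+ \frac{m_a x}{\log^6 x} < \pi(x) < x \sum_{k=0}^{4} \frac{k!}{\log^{k+1}x}+\frac{M_a x}{\log^6 x}.$$ Then there exists a number $x_a'$, determined completely by $m_a$, $M_a$ and $x_a$, such that $$\pi(x)^2 < \frac{e\,x}{\log x}\,\pi\!\Big(\frac{x}{e}\Big)$$ holds for all $x > \max(e\,x_a, x_a')$.
   Context: $\pi(x)$ denotes the number of primes less than or equal to $x$; $\log$ is the natural logarithm. *)

(* Defs.v *)
From Stdlib Require Import Reals ZArith Znumtheory List Arith.
Open Scope R_scope.

Definition prime_count (n : nat) : nat :=
  length (filter (fun k => if prime_dec (Z.of_nat k) then true else false)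
                 (seq 0 (S n))).

(* pi(x) = #{ p prime : p <= x } = prime_count (floor x); 0 for x < 0 *)
Definition prime_pi (x : R) : R :=
  INR (prime_count (Z.to_nat (Int_part x))).

Definition li_approx (x : R) : R :=
  x * sum_f_R0 (fun k => INR (fact k) / (ln x) ^ (S k)) 4.

(* Main.v *)
Require Import Defs.
From Stdlib Require Import Reals.
From Stdlib Require Import Lra Lia Psatz.
Open Scope R_scope.

Definition Rpart (m M t : R) : R := (128)*(1)*t^1 + (-2)*(M)*t^1 + (1)*(m)*t^1 + (-404)*(1)*t^2 + (10)*(M)*t^2 + (492)*(1)*t^3 + (-22)*(M)*t^3 + (-257)*(1)*t^4 + (22)*(M)*t^4 + (1064)*(1)*t^5 + (-26)*(M)*t^5 + (-4492)*(1)*t^6 + (170)*(M)*t^6 + (-1)*(M^2)*t^6 + (7920)*(1)*t^7 + (-530)*(M)*t^7 + (6)*(M^2)*t^7 + (-7044)*(1)*t^8 + (802)*(M)*t^8 + (-15)*(M^2)*t^8 + (3168)*(1)*t^9 + (-652)*(M)*t^9 + (20)*(M^2)*t^9 + (-576)*(1)*t^10 + (276)*(M)*t^10 + (-15)*(M^2)*t^10 + (-48)*(M)*t^11 + (6)*(M^2)*t^11 + (-1)*(M^2)*t^12.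
Definition Kc (m M : R) : R := Rabs (128)*Rabs (1) + Rabs (-2)*Rabs (M) + Rabs (1)*Rabs (m) + Rabs (-404)*Rabs (1) + Rabs (10)*Rabs (M) + Rabs (492)*Rabs (1) + Rabs (-22)*Rabs (M) + Rabs (-257)*Rabs (1) + Rabs (22)*Rabs (M) + Rabs (1064)*Rabs (1) + Rabs (-26)*Rabs (M) + Rabs (-4492)*Rabs (1) + Rabs (170)*Rabs (M) + Rabs (-1)*Rabs (M^2) + Rabs (7920)*Rabs (1) + Rabs (-530)*Rabs (M) + Rabs (6)*Rabs (M^2) + Rabs (-7044)*Rabs (1) + Rabs (802)*Rabs (M) + Rabs (-15)*Rabs (M^2) + Rabs (3168)*Rabs (1) + Rabs (-652)*Rabs (M) + Rabs (20)*Rabs (M^2) + Rabs (-576)*Rabs (1) + Rabs (276)*Rabs (M) + Rabs (-15)*Rabs (M^2) + Rabs (-48)*Rabs (M) + Rabs (6)*Rabs (M^2) + Rabs (-1)*Rabs (M^2).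

Lemma pow_le1 t (j:nat) : 0 <= t -> t <= 1 -> t ^ j <= 1.
Proof. intros. induction j; simpl; [lra|]. assert (0 <= t^j) by (apply pow_le; lra). nra. Qed.

Lemma term_lb c u (j : nat) t : 0 < t -> t <= 1 -> (1 <= j)%nat ->
  c * u * t ^ j >= - (Rabs c * Rabs u) * t.
Proof.
  intros H0 H1 Hj.
  assert (Htj : t ^ j <= t).
  { destruct j as [|j]; [lia|]. simpl.
    assert (t ^ j <= 1) by (apply pow_le1; lra).
    assert (0 <= t ^ j) by (apply pow_le; lra). nra. }
  assert (0 <= t ^ j) by (apply pow_le; lra).
  assert (- (Rabs c * Rabs u) <= c * u).
  { rewrite <- Rabs_mult. pose proof (Rle_abs (- (c*u))). rewrite Rabs_Ropp in H2. lra. }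
  assert (0 <= Rabs c * Rabs u) by (apply Rmult_le_pos; apply Rabs_pos).
  nra.
Qed.

Lemma Kc_nonneg m M : 0 <= Kc m M.
Proof.
  unfold Kc.
  pose proof (Rabs_pos (128)); pose proof (Rabs_pos (1)).
  pose proof (Rabs_pos (-2)); pose proof (Rabs_pos (M)).
  pose proof (Rabs_pos (1)); pose proof (Rabs_pos (m)).
  pose proof (Rabs_pos (-404)); pose proof (Rabs_pos (1)).
  pose proof (Rabs_pos (10)); pose proof (Rabs_pos (M)).
  pose proof (Rabs_pos (492)); pose proof (Rabs_pos (1)).
  pose proof (Rabs_pos (-22)); pose proof (Rabs_pos (M)).
  pose proof (Rabs_pos (-257)); pose proof (Rabs_pos (1)).
  pose proof (Rabs_pos (22)); pose proof (Rabs_pos (M)).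
  pose proof (Rabs_pos (1064)); pose proof (Rabs_pos (1)).
  pose proof (Rabs_pos (-26)); pose proof (Rabs_pos (M)).
  pose proof (Rabs_pos (-4492)); pose proof (Rabs_pos (1)).
  pose proof (Rabs_pos (170)); pose proof (Rabs_pos (M)).
  pose proof (Rabs_pos (-1)); pose proof (Rabs_pos (M^2)).
  pose proof (Rabs_pos (7920)); pose proof (Rabs_pos (1)).
  pose proof (Rabs_pos (-530)); pose proof (Rabs_pos (M)).
  pose proof (Rabs_pos (6)); pose proof (Rabs_pos (M^2)).
  pose proof (Rabs_pos (-7044)); pose proof (Rabs_pos (1)).
  pose proof (Rabs_pos (802)); pose proof (Rabs_pos (M)).
  pose proof (Rabs_pos (-15)); pose proof (Rabs_pos (M^2)).
  pose proof (Rabs_pos (3168)); pose proof (Rabs_pos (1)).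
  pose proof (Rabs_pos (-652)); pose proof (Rabs_pos (M)).
  pose proof (Rabs_pos (20)); pose proof (Rabs_pos (M^2)).
  pose proof (Rabs_pos (-576)); pose proof (Rabs_pos (1)).
  pose proof (Rabs_pos (276)); pose proof (Rabs_pos (M)).
  pose proof (Rabs_pos (-15)); pose proof (Rabs_pos (M^2)).
  pose proof (Rabs_pos (-48)); pose proof (Rabs_pos (M)).
  pose proof (Rabs_pos (6)); pose proof (Rabs_pos (M^2)).
  pose proof (Rabs_pos (-1)); pose proof (Rabs_pos (M^2)).
  nra.
Qed.

Lemma Rpart_lb m M t : 0 < t -> t <= 1 -> Rpart m M t >= - Kc m M * t.
Proof.
  intros Ht0 Ht1. unfold Rpart, Kc.
  pose proof (term_lb (128) (1) 1 t Ht0 Ht1 ltac:(lia)).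
  pose proof (term_lb (-2) (M) 1 t Ht0 Ht1 ltac:(lia)).
  pose proof (term_lb (1) (m) 1 t Ht0 Ht1 ltac:(lia)).
  pose proof (term_lb (-404) (1) 2 t Ht0 Ht1 ltac:(lia)).
  pose proof (term_lb (10) (M) 2 t Ht0 Ht1 ltac:(lia)).
  pose proof (term_lb (492) (1) 3 t Ht0 Ht1 ltac:(lia)).
  pose proof (term_lb (-22) (M) 3 t Ht0 Ht1 ltac:(lia)).
  pose proof (term_lb (-257) (1) 4 t Ht0 Ht1 ltac:(lia)).
  pose proof (term_lb (22) (M) 4 t Ht0 Ht1 ltac:(lia)).
  pose proof (term_lb (1064) (1) 5 t Ht0 Ht1 ltac:(lia)).
  pose proof (term_lb (-26) (M) 5 t Ht0 Ht1 ltac:(lia)).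
  pose proof (term_lb (-4492) (1) 6 t Ht0 Ht1 ltac:(lia)).
  pose proof (term_lb (170) (M) 6 t Ht0 Ht1 ltac:(lia)).
  pose proof (term_lb (-1) (M^2) 6 t Ht0 Ht1 ltac:(lia)).
  pose proof (term_lb (7920) (1) 7 t Ht0 Ht1 ltac:(lia)).
  pose proof (term_lb (-530) (M) 7 t Ht0 Ht1 ltac:(lia)).
  pose proof (term_lb (6) (M^2) 7 t Ht0 Ht1 ltac:(lia)).
  pose proof (term_lb (-7044) (1) 8 t Ht0 Ht1 ltac:(lia)).
  pose proof (term_lb (802) (M) 8 t Ht0 Ht1 ltac:(lia)).
  pose proof (term_lb (-15) (M^2) 8 t Ht0 Ht1 ltac:(lia)).
  pose proof (term_lb (3168) (1) 9 t Ht0 Ht1 ltac:(lia)).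
  pose proof (term_lb (-652) (M) 9 t Ht0 Ht1 ltac:(lia)).
  pose proof (term_lb (20) (M^2) 9 t Ht0 Ht1 ltac:(lia)).
  pose proof (term_lb (-576) (1) 10 t Ht0 Ht1 ltac:(lia)).
  pose proof (term_lb (276) (M) 10 t Ht0 Ht1 ltac:(lia)).
  pose proof (term_lb (-15) (M^2) 10 t Ht0 Ht1 ltac:(lia)).
  pose proof (term_lb (-48) (M) 11 t Ht0 Ht1 ltac:(lia)).
  pose proof (term_lb (6) (M^2) 11 t Ht0 Ht1 ltac:(lia)).
  pose proof (term_lb (-1) (M^2) 12 t Ht0 Ht1 ltac:(lia)).
  lra.
Qed.

Lemma pos_part m M t : 0 < t -> t <= 1/2 -> t * Kc m M < 1 -> 0 < 1 + Rpart m M t.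
Proof. intros. pose proof (Rpart_lb m M t H ltac:(lra)). lra. Qed.

Lemma ident m M t : 0 < t -> t < 1 ->
  let s := t / (1 - t) in
  t * (s + s^2 + 2*s^3 + 6*s^4 + 24*s^5 + m*s^6)
  - (t + t^2 + 2*t^3 + 6*t^4 + 24*t^5 + M*t^6)^2
  = t^6 * (1 + Rpart m M t) / (1 - t)^6.
Proof.
  intros H0 H1 s. unfold s, Rpart. field. lra.
Qed.

Lemma li_eq x c : ln x <> 0 ->
  let u := / ln x in
  li_approx x + c * x / (ln x)^6 = x * (u + u^2 + 2*u^3 + 6*u^4 + 24*u^5 + c*u^6).
Proof.
  intros H u. unfold u, li_approx. simpl. field. auto.
Qed.

Theorem lemma1 :
  exists xa' : R -> R -> R -> R,
  forall (ma Ma xa : R), 1 < xa ->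
    (forall x, xa < x ->
       li_approx x + ma * x / (ln x) ^ 6 < prime_pi x /\
       prime_pi x < li_approx x + Ma * x / (ln x) ^ 6) ->
    forall x, Rmax (exp 1 * xa) (xa' ma Ma xa) < x ->
      (prime_pi x) ^ 2 < exp 1 * x / ln x * prime_pi (x / exp 1).
Proof.
  exists (fun ma Ma xa => exp (2 + Kc ma Ma)).
  intros ma Ma xa Hxa H x Hx.
  pose proof (Rmax_l (exp 1 * xa) (exp (2 + Kc ma Ma))) as Hm1.
  pose proof (Rmax_r (exp 1 * xa) (exp (2 + Kc ma Ma))) as Hm2.
  pose proof (Kc_nonneg ma Ma) as HK.
  set (K := Kc ma Ma) in *.
  set (e := exp 1) in *.
  assert (He : 1 < e) by (unfold e; pose proof (exp_ineq1 1 ltac:(lra)); lra).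
  assert (Hxpos : 0 < x) by (pose proof (exp_pos (2 + K)); lra).
  assert (HL : 2 + K < ln x).
  { apply exp_lt_inv. rewrite exp_ln by lra. lra. }
  assert (HL0 : ln x <> 0) by (apply Rgt_not_eq; lra).
  set (L := ln x) in *.
  assert (Hy : xa < x / e).
  { apply (Rmult_lt_reg_l e); [lra|]. field_simplify; lra. }
  assert (Hxx : xa < x) by nra.
  assert (HlnY : ln (x / e) = L - 1).
  { unfold L, e. unfold Rdiv. pose proof (exp_pos 1). rewrite ln_mult by (try lra; apply Rinv_0_lt_compat; lra). rewrite ln_Rinv by lra. rewrite ln_exp. lra. }
  assert (HL1 : ln (x / e) <> 0) by (rewrite HlnY; apply Rgt_not_eq; lra).
  set (t := / L).
  assert (Ht0 : 0 < t) by (unfold t; apply Rinv_0_lt_compat; lra).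
  assert (HtL : t * L = 1) by (unfold t; field; lra).
  assert (Ht12 : t <= 1/2) by nra.
  assert (HtK : t * K < 1) by nra.
  destruct (H x Hxx) as [_ Hup].
  destruct (H (x / e) Hy) as [Hlo _].
  rewrite li_eq in Hup by exact HL0.
  rewrite li_eq in Hlo by exact HL1. rewrite HlnY in Hlo.
  set (s := / (L - 1)) in Hlo.
  assert (Hs : s = t / (1 - t)).
  { unfold s, t. field. split; lra. }
  rewrite Hs in Hlo.
  pose proof (ident ma Ma t Ht0 ltac:(lra)) as Hid. cbv zeta in Hid.
  pose proof (pos_part ma Ma t Ht0 Ht12 HtK) as Hpp.
  set (A := t + t^2 + 2*t^3 + 6*t^4 + 24*t^5 + Ma*t^6) in *.
  set (B := t / (1 - t) + (t / (1 - t))^2 + 2*(t / (1 - t))^3 + 6*(t / (1 - t))^4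
            + 24*(t / (1 - t))^5 + ma*(t / (1 - t))^6) in *.
  assert (HAB : A^2 < t * B).
  { assert (0 < t^6 * (1 + Rpart ma Ma t) / (1 - t)^6).
    { apply Rdiv_lt_0_compat. apply Rmult_lt_0_compat; auto. apply pow_lt; lra.
      apply pow_lt; lra. }
    lra. }
  assert (Hpi0 : 0 <= prime_pi x) by (unfold prime_pi; apply pos_INR).
  assert (Hrhs : e * x / L * prime_pi (x / e) = (e * x * t) * prime_pi (x / e)).
  { unfold e, t, Rdiv. ring. }
  rewrite Hrhs.
  assert (Hc : 0 < e * x * t) by (apply Rmult_lt_0_compat; nra).
  assert (H1 : (e * x * t) * (x / e * B) < (e * x * t) * prime_pi (x / e)).
  { apply Rmult_lt_compat_l; auto. }
  assert (H2 : (e * x * t) * (x / e * B) = x^2 * (t * B)) by (field; apply Rgt_not_eq; lra).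
  assert (Hup' : prime_pi x < x * A) by exact Hup.
  assert (H3 : prime_pi x ^ 2 < (x * A)^2) by nra.
  assert (H4 : (x * A)^2 <= x^2 * (t*B)).
  { rewrite Rpow_mult_distr. apply Rmult_le_compat_l; [nra|lra]. }
  lra.
Qed.
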